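(* For $\alpha\in\mathbb{R}\setminus\{0\}$ consider the three-stage explicit Runge--Kutta method with $$A=\begin{pmatrix}0&0&0\\ \tfrac23&0&0\\ \tfrac23-\tfrac1{4\alpha}&\tfrac1{4\alpha}&0\end{pmatrix},\qquad b^\top=\Big(\tfrac14,\ \tfrac34-\alpha,\ \alpha\Big).$$ Its positivity step-size coefficient is $$\gamma_\alpha=\begin{cases}0,&0\ne\alpha<\tfrac38,\\ 2\alpha,&\tfrac38\le\alpha<\tfrac12,\\ 1,&\tfrac12\le\alpha\le\tfrac34,\\ 0,&\alpha>\tfrac34.\end{cases}$$
   Context: For a three-stage explicit Runge--Kutta method with strictly lower-triangular $A=(a_{ij})$ and weights $b$, the positivity polynomials in the variables $x,y,z,u,v,w$ are $P_0=1-b_1z-b_2v+a_{21}b_2zv-b_3w+a_{31}b_3zw+a_{32}b_3vw-a_{32}a_{21}b_3zvw$, $P_1=b_1z+b_2v-a_{21}b_2yv-a_{21}b_2zv+b_3w-a_{31}b_3yw-a_{32}b_3uw+a_{32}a_{21}b_3yuw-a_{31}b_3zw-a_{32}b_3vw+a_{32}a_{21}b_3yvw+a_{32}a_{21}b_3zvw$, $P_2=a_{21}b_2yv+a_{31}b_3yw+a_{32}b_3uw-a_{32}a_{21}b_3xuw-a_{32}a_{21}b_3yuw-a_{32}a_{21}b_3yvw$, $P_3=a_{32}a_{21}b_3xuw$. They arise from applying the method to $u_k'=q_k(u,t)(u_{k-1}-u_k)/\Delta x$, which gives $u^{n+1}_k=\sum_{i=0}^3P_iu^n_{k-i}$ with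 $x=\xi^1_{k-2}$, $y=\xi^1_{k-1}$, $z=\xi^1_k$, $u=\xi^2_{k-1}$, $v=\xi^2_k$, $w=\xi^3_k$, where $\xi^j_\ell=\frac{\Delta t}{\Delta x}q_\ell(y^j,t_n+c_j\Delta t)$ for stage values $y^j$. The step-size coefficient is $\gamma=\sup\{\delta\ge0:P_0,\dots,P_3\ge0\text{ on }[0,\delta]^6\}$ (or $0$ if the set is empty). *)

(* Defs.v *)
From Stdlib Require Import Reals Lra.
Open Scope R_scope.

(* Positivity polynomials of a 3-stage explicit RK method with strictly
   lower-triangular A = (a21; a31 a32) and weights b = (b1,b2,b3). *)
Definition P0 (a21 a31 a32 b1 b2 b3 x y z u v w : R) : R :=
  1 - b1*z - b2*v + a21*b2*z*v - b3*w + a31*b3*z*w + a32*b3*v*w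
    - a32*a21*b3*z*v*w.

Definition P1 (a21 a31 a32 b1 b2 b3 x y z u v w : R) : R :=
  b1*z + b2*v - a21*b2*y*v - a21*b2*z*v + b3*w - a31*b3*y*w - a32*b3*u*w
    + a32*a21*b3*y*u*w - a31*b3*z*w - a32*b3*v*w + a32*a21*b3*y*v*w
    + a32*a21*b3*z*v*w.

Definition P2 (a21 a31 a32 b1 b2 b3 x y z u v w : R) : R :=
  a21*b2*y*v + a31*b3*y*w + a32*b3*u*w - a32*a21*b3*x*u*w
    - a32*a21*b3*y*u*w - a32*a21*b3*y*v*w.

Definition P3 (a21 a31 a32 b1 b2 b3 x y z u v w : R) : R :=
  a32*a21*b3*x*u*w.

Definition in01 (d t : R) : Prop := 0 <= t <= d.

Definition admissible (a21 a31 a32 b1 b2 b3 : R) (d : R) : Prop :=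
  0 <= d /\
  forall x y z u v w : R,
    in01 d x -> in01 d y -> in01 d z -> in01 d u -> in01 d v -> in01 d w ->
    0 <= P0 a21 a31 a32 b1 b2 b3 x y z u v w /\
    0 <= P1 a21 a31 a32 b1 b2 b3 x y z u v w /\
    0 <= P2 a21 a31 a32 b1 b2 b3 x y z u v w /\
    0 <= P3 a21 a31 a32 b1 b2 b3 x y z u v w.

Definition is_step_size_coeff (a21 a31 a32 b1 b2 b3 : R) (g : R) : Prop :=
  ((exists d, admissible a21 a31 a32 b1 b2 b3 d) /\
     is_lub (admissible a21 a31 a32 b1 b2 b3) g)
  \/ ((forall d, ~ admissible a21 a31 a32 b1 b2 b3 d) /\ g = 0).

Definition gamma_alpha (al : R) : R :=
  if Rlt_dec al (3/8) then 0
  else if Rlt_dec al (1/2) then 2*al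
  else if Rle_dec al (3/4) then 1
  else 0.

(* Main.v *)
Require Import Defs.
From Stdlib Require Import Reals Lra Psatz.
Open Scope R_scope.

Definition Q0 al z v w := 1 - z/4 - (3/4-al)*v + (2/3)*(3/4-al)*z*v - al*w + (2*al/3 - 1/4)*z*w + v*w/4 - z*v*w/6.
Definition Q1 al y z u v w := z/4 + (3/4-al)*v - (2/3)*(3/4-al)*(y+z)*v + al*w - (2*al/3-1/4)*(y+z)*w - (u+v)*w/4 + (y*u*w + y*v*w + z*v*w)/6.
Definition Q2 al x y u v w := (2/3)*(3/4-al)*y*v + (2*al/3-1/4)*y*w + u*w/4 - (x*u*w + y*u*w + y*v*w)/6.

Lemma aff (d t : R) (f : R -> R) : 0 < d -> 0 <= t <= d ->
  (forall s, d * f s = (d - s) * f 0 + s * f d) -> 0 <= f 0 -> 0 <= f d -> 0 <= f t.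
Proof.
  intros Hd Ht Hf H0 H1. specialize (Hf t).
  assert (0 <= d * f t) by (rewrite Hf; apply Rplus_le_le_0_compat; apply Rmult_le_pos; lra).
  nra.
Qed.

Ltac peel d t Ht Hd :=
  lazymatch goal with |- 0 <= ?e =>
    let F := eval pattern t in e in
    lazymatch F with ?g _ =>
      apply (aff d t g); [exact Hd | exact Ht | intro; cbv beta; unfold Q0, Q1, Q2; field | cbv beta | cbv beta]
    end
  end.

Lemma boxA al x y z u v w : 3/8 <= al <= 1/2 ->
  in01 (2*al) x -> in01 (2*al) y -> in01 (2*al) z -> in01 (2*al) u -> in01 (2*al) v -> in01 (2*al) w ->
  0 <= Q0 al z v w /\ 0 <= Q1 al y z u v w /\ 0 <= Q2 al x y u v w.
Proof.
  intros Ha Hx Hy Hz Hu Hv Hw. unfold in01 in *.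
  assert (Hd : 0 < 2*al) by lra.
  split; [|split].
  - peel (2*al) z Hz Hd; peel (2*al) v Hv Hd; peel (2*al) w Hw Hd; unfold Q0; nra.
  - peel (2*al) y Hy Hd; peel (2*al) z Hz Hd; peel (2*al) u Hu Hd; peel (2*al) v Hv Hd; peel (2*al) w Hw Hd; unfold Q1; nra.
  - peel (2*al) x Hx Hd; peel (2*al) y Hy Hd; peel (2*al) u Hu Hd; peel (2*al) v Hv Hd; peel (2*al) w Hw Hd; unfold Q2; nra.
Qed.
Lemma boxB al x y z u v w : 1/2 <= al <= 3/4 ->
  in01 1 x -> in01 1 y -> in01 1 z -> in01 1 u -> in01 1 v -> in01 1 w ->
  0 <= Q0 al z v w /\ 0 <= Q1 al y z u v w /\ 0 <= Q2 al x y u v w.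
Proof.
  intros Ha Hx Hy Hz Hu Hv Hw. unfold in01 in *.
  assert (Hd : 0 < 1) by lra.
  split; [|split].
  - peel 1 z Hz Hd; peel 1 v Hv Hd; peel 1 w Hw Hd; unfold Q0; nra.
  - peel 1 y Hy Hd; peel 1 z Hz Hd; peel 1 u Hu Hd; peel 1 v Hv Hd; peel 1 w Hw Hd; unfold Q1; nra.
  - peel 1 x Hx Hd; peel 1 y Hy Hd; peel 1 u Hu Hd; peel 1 v Hv Hd; peel 1 w Hw Hd; unfold Q2; nra.
Qed.


Lemma PQ al x y z u v w : al <> 0 ->
  P0 (2/3) (2/3 - 1/(4*al)) (1/(4*al)) (1/4) (3/4 - al) al x y z u v w = Q0 al z v w /\
  P1 (2/3) (2/3 - 1/(4*al)) (1/(4*al)) (1/4) (3/4 - al) al x y z u v w = Q1 al y z u v w /\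
  P2 (2/3) (2/3 - 1/(4*al)) (1/(4*al)) (1/4) (3/4 - al) al x y z u v w = Q2 al x y u v w /\
  P3 (2/3) (2/3 - 1/(4*al)) (1/(4*al)) (1/4) (3/4 - al) al x y z u v w = x*u*w/6.
Proof.
  intro H. unfold P0, P1, P2, P3, Q0, Q1, Q2.
  repeat split; field; exact H.
Qed.

Lemma lub_of (S : R -> Prop) g : S g -> (forall d, g < d -> ~ S d) -> is_lub S g.
Proof.
  intros Hg Hn. split.
  - intros d Hd. destruct (Rle_lt_dec d g); auto. exfalso; exact (Hn d r Hd).
  - intros b Hb. apply Hb; exact Hg.
Qed.

Lemma adm_box al g : al <> 0 -> 0 <= g ->
  (forall x y z u v w, in01 g x -> in01 g y -> in01 g z -> in01 g u -> in01 g v -> in01 g w ->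
    0 <= Q0 al z v w /\ 0 <= Q1 al y z u v w /\ 0 <= Q2 al x y u v w) ->
  admissible (2/3) (2/3 - 1/(4*al)) (1/(4*al)) (1/4) (3/4 - al) al g.
Proof.
  intros Hal Hg H. split; [exact Hg|].
  intros x y z u v w Hx Hy Hz Hu Hv Hw.
  destruct (PQ al x y z u v w Hal) as [E0 [E1 [E2 E3]]].
  rewrite E0, E1, E2, E3.
  destruct (H x y z u v w Hx Hy Hz Hu Hv Hw) as [? [? ?]].
  unfold in01 in *.
  repeat split; auto.
  assert (0 <= x*u) by (apply Rmult_le_pos; lra).
  assert (0 <= x*u*w) by (apply Rmult_le_pos; lra).
  lra.
Qed.

Theorem proposition5 (al : R) (Hal : al <> 0) :
  is_step_size_coeff (2/3) (2/3 - 1/(4*al)) (1/(4*al))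
                     (1/4) (3/4 - al) al (gamma_alpha al).
Proof.
  left.
  assert (Hadm0 : admissible (2/3) (2/3 - 1/(4*al)) (1/(4*al)) (1/4) (3/4 - al) al 0).
  { apply adm_box; [exact Hal | lra |].
    intros x y z u v w Hx Hy Hz Hu Hv Hw. unfold in01 in *.
    assert (x = 0) by lra. assert (y = 0) by lra. assert (z = 0) by lra.
    assert (u = 0) by lra. assert (v = 0) by lra. assert (w = 0) by lra.
    subst. unfold Q0, Q1, Q2. lra. }
  unfold gamma_alpha.
  destruct (Rlt_dec al (3/8)) as [H1|H1].
  { split; [exists 0; exact Hadm0|]. apply lub_of; [exact Hadm0|].
    intros d Hd [_ Had].
    destruct (Rlt_le_dec al 0) as [Hn|Hp].
    - destruct (Had 0 0 0 0 0 d) as [_ [HP1 _]]; unfold in01; try lra.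
      destruct (PQ al 0 0 0 0 0 d Hal) as [_ [E _]]. rewrite E in HP1.
      unfold Q1 in HP1. nra.
    - destruct (Had 0 d 0 0 0 d) as [_ [_ [HP2 _]]]; unfold in01; try lra.
      destruct (PQ al 0 d 0 0 0 d Hal) as [_ [_ [E _]]]. rewrite E in HP2.
      unfold Q2 in HP2. assert (0 < d*d) by nra. assert (al > 0) by lra. nra. }
  destruct (Rlt_dec al (1/2)) as [H2|H2].
  { assert (Hg : admissible (2/3) (2/3 - 1/(4*al)) (1/(4*al)) (1/4) (3/4 - al) al (2*al)).
    { apply adm_box; [exact Hal | lra |]. intros. apply boxA; auto; lra. }
    split; [exists (2*al); exact Hg|]. apply lub_of; [exact Hg|].
    intros d Hd [_ Had].
    destruct (Had d d 0 d 0 d) as [_ [_ [HP2 _]]]; unfold in01; try lra.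
    destruct (PQ al d d 0 d 0 d Hal) as [_ [_ [E _]]]. rewrite E in HP2.
    unfold Q2 in HP2. assert (0 < d*d) by nra. nra. }
  destruct (Rle_dec al (3/4)) as [H3|H3].
  { assert (Hg : admissible (2/3) (2/3 - 1/(4*al)) (1/(4*al)) (1/4) (3/4 - al) al 1).
    { apply adm_box; [exact Hal | lra |]. intros. apply boxB; auto; lra. }
    split; [exists 1; exact Hg|]. apply lub_of; [exact Hg|].
    intros d Hd [_ Had].
    destruct (Had d d 0 d d d) as [_ [_ [HP2 _]]]; unfold in01; try lra.
    destruct (PQ al d d 0 d d d Hal) as [_ [_ [E _]]]. rewrite E in HP2.
    unfold Q2 in HP2. assert (0 < d*d) by nra. nra. }
  { split; [exists 0; exact Hadm0|]. apply lub_of; [exact Hadm0|].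
    intros d Hd [_ Had].
    destruct (Had 0 0 0 0 d 0) as [_ [HP1 _]]; unfold in01; try lra.
    destruct (PQ al 0 0 0 0 d 0 Hal) as [_ [E _]]. rewrite E in HP1.
    unfold Q1 in HP1. nra. }
Qed.
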